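(* Let $n\ge1$, $T\ge1$, $\theta\in(0,1]$, and let $C_1,\dots,C_T\in\mathbb{R}^{1\times n}$ be i.i.d. random row vectors such that $C_t=0$ with probability $1-\theta$ and, with probability $\theta$, $C_t$ is uniformly distributed on $\{e_1^\top,\dots,e_n^\top\}$ (the canonical basis vectors of $\mathbb{R}^n$). Let $O_T^\top O_T=\sum_{t=1}^T C_t^\top C_t$. Then for any $\delta\in(0,1)$, if $T\ge\frac{8n}{\theta}\log(\frac n\delta)$, with probability at least $1-2\delta$, $$\frac{\theta T}{2n}I_n\preceq O_T^\top O_T\preceq\frac{2e\theta T}{n}I_n.$$
   Context: $\preceq$ is the Löwner (positive semidefinite) order. *)

(* Defs.v *)
From HB Require Import structures.
From mathcomp Require Import all_boot all_order all_algebra.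
From mathcomp Require Import boolp reals sequences exp.
Set Implicit Arguments. Unset Strict Implicit. Unset Printing Implicit Defensive.
Import Order.TTheory GRing.Theory Num.Theory.
Local Open Scope ring_scope.

Definition psd (R : realType) (n : nat) (M : 'M[R]_n) : Prop :=
  forall x : 'cV[R]_n, 0 <= (x^T *m M *m x) 0 0.

Definition loewner_le (R : realType) (n : nat) (A B : 'M[R]_n) : Prop :=
  psd (B - A).

(* Outcome of one draw: None = the zero row vector, Some i = e_i^T. *)
Definition crow (R : realType) (n : nat) (c : option 'I_n) : 'rV[R]_n :=
  match c with None => 0 | Some i => delta_mx 0 i end.

Definition cmass (R : realType) (n : nat) (theta : R) (c : option 'I_n) : R :=
  match c with None => 1 - theta | Some _ => theta / n%:R end.

Definition OtO (R : realType) (n T : nat) (w : {ffun 'I_T -> option 'I_n}) : 'M[R]_n :=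
  \sum_(t < T) (crow R (w t))^T *m crow R (w t).

Definition iid_prob (R : realType) (n T : nat) (theta : R)
  (E : {ffun 'I_T -> option 'I_n} -> Prop) : R :=
  \sum_(w : {ffun 'I_T -> option 'I_n} | `[< E w >]) \prod_(t < T) cmass theta (w t).

(* Main.v *)
Require Import Defs.
From HB Require Import structures.
From mathcomp Require Import all_boot all_order all_algebra.
From mathcomp Require Import boolp reals sequences exp.
From mathcomp Require Import ring lra.
Import Order.TTheory GRing.Theory Num.Theory.
Local Open Scope ring_scope.
Set Implicit Arguments. Unset Strict Implicit. Unset Printing Implicit Defensive.

Definition Nc (R : realType) n T (w : {ffun 'I_T -> option 'I_n}) (i : 'I_n) : R :=
  \sum_(t < T) ((w t == Some i)%:R).

Lemma OtO_diag (R : realType) n T (w : {ffun 'I_T -> option 'I_n}) :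
  OtO R w = diag_mx (\row_i Nc R w i).
Proof.
apply/matrixP => j k; rewrite /OtO summxE !mxE /Nc -sumrMnl.
apply: eq_bigr => t _.
case: (w t) => [i|] /=; last by rewrite trmx0 mul0mx mxE mul0rn.
rewrite trmx_delta mul_delta_mx !mxE.
have [eji|nji] := eqVneq j i; have [eki|nki] := eqVneq k i.
- by rewrite eji eki !eqxx.
- by rewrite eji eq_sym (negbTE nki) mulr0n.
- by rewrite (_ : (Some i == Some j) = false) ?mul0rn //; apply/eqP => -[eij]; rewrite eij eqxx in nji.
- by rewrite (_ : (Some i == Some j) = false) ?mul0rn //; apply/eqP => -[eij]; rewrite eij eqxx in nji.
Qed.

Lemma psd_diag (R : realType) n (d : 'rV[R]_n) :
  (forall i, 0 <= d 0 i) -> psd (diag_mx d).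
Proof.
move=> hd x; rewrite mul_mx_diag mxE; apply: sumr_ge0 => j _.
rewrite !mxE; have := hd j; nra.
Qed.

Lemma loewner_diag (R : realType) n (d : 'rV[R]_n) a b :
  (forall i, a <= d 0 i <= b) ->
  loewner_le (a *: 1%:M) (diag_mx d) /\ loewner_le (diag_mx d) (b *: 1%:M).
Proof.
move=> h; rewrite /loewner_le; split.
- have -> : diag_mx d - a *: 1%:M = diag_mx (\row_i (d 0 i - a)).
    apply/matrixP => j k; rewrite !mxE; case: (eqVneq j k) => [->|]/=; first by rewrite !mulr1n mulr1.
    by rewrite !mulr0n mulr0 subr0.
  by apply: psd_diag => i; rewrite mxE subr_ge0; case/andP: (h i).
- have -> : b *: 1%:M - diag_mx d = diag_mx (\row_i (b - d 0 i)).
    apply/matrixP => j k; rewrite !mxE; case: (eqVneq j k) => [->|]/=; first by rewrite !mulr1n mulr1.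
    by rewrite !mulr0n mulr0 subr0.
  by apply: psd_diag => i; rewrite mxE subr_ge0; case/andP: (h i).
Qed.

Lemma sum_option (R : realType) n (F : option 'I_n -> R) :
  \sum_c F c = F None + \sum_i F (Some i).
Proof.
rewrite (bigD1 None) //=; congr (_ + _).
rewrite (reindex_omap Some (fun x => x)) /=; last by case.
by apply: eq_bigl => i; rewrite eqxx.
Qed.

Lemma sum_prod (R : realType) n T (g : option 'I_n -> R) :
  \sum_(w : {ffun 'I_T -> option 'I_n}) \prod_(t < T) g (w t) = (\sum_c g c) ^+ T.
Proof.
by rewrite -(bigA_distr_bigA (fun (_ : 'I_T) (c : option 'I_n) => g c)) /= prodr_const card_ord.
Qed.

Lemma M_eval (R : realType) n (theta s : R) (i : 'I_n) : (0 < n)%N ->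
  \sum_c cmass theta c * expR (s * ((c == Some i)%:R)) = 1 + theta / n%:R * (expR s - 1).
Proof.
move=> n0; rewrite sum_option /= mulr0 expR0 mulr1.
have E : forall j : 'I_n, theta / n%:R * expR (s * (Some j == Some i)%:R)
   = theta / n%:R + theta / n%:R * ((j == i)%:R * (expR s - 1)).
  move=> j; have [->|nji] := eqVneq j i; rewrite ?eqxx ?mulr1 ?mul1r.
    by ring.
  rewrite (_ : (Some j == Some i) = false); last by apply/eqP => -[e]; rewrite e eqxx in nji.
  by rewrite mulr0 expR0 mul0r mulr0 addr0 mulr1.
rewrite (eq_bigr _ (fun j _ => E j)) big_split /= sumr_const card_ord.
rewrite (bigD1 i) //= eqxx big1; last by move=> j /negbTE ->; rewrite mul0r mulr0.
have nz : n%:R != 0 :> R by rewrite pnatr_eq0 -lt0n.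
rewrite -[X in _ + (X + _)]mulr_natr mulfVK // addr0 mul1r; ring.
Qed.

Lemma mgf (R : realType) n T (theta s : R) (i : 'I_n) : (0 < n)%N ->
  \sum_(w : {ffun 'I_T -> option 'I_n}) (\prod_(t < T) cmass theta (w t)) * expR (s * Nc R w i)
  = (1 + theta / n%:R * (expR s - 1)) ^+ T.
Proof.
move=> n0; rewrite -(M_eval theta s i n0) -sum_prod.
apply: eq_bigr => w _; rewrite /Nc mulr_sumr expR_sum -big_split /=.
by [].
Qed.

Lemma sumP1 (R : realType) n T (theta : R) : (0 < n)%N ->
  \sum_(w : {ffun 'I_T -> option 'I_n}) (\prod_(t < T) cmass theta (w t)) = 1.
Proof.
move=> n0; rewrite sum_prod sum_option sumr_const card_ord /=.
have nz : n%:R != 0 :> R by rewrite pnatr_eq0 -lt0n.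
rewrite -[X in _ + X]mulr_natr mulfVK // subrK; exact: expr1n.
Qed.

Lemma mgf_bound (R : realType) n T (theta s : R) (i : 'I_n) : (0 < n)%N ->
  0 < theta <= 1 ->
  \sum_(w : {ffun 'I_T -> option 'I_n}) (\prod_(t < T) cmass theta (w t)) * expR (s * Nc R w i)
  <= expR (T%:R * (theta / n%:R) * (expR s - 1)).
Proof.
move=> n0 /andP[t0 t1]; rewrite mgf // -[T%:R * _ * _]mulrA expRM_natl.
have n1 : 1 <= n%:R :> R by rewrite ler1n.
have p0 : 0 <= theta / n%:R by rewrite divr_ge0 // ltW.
have p1 : theta / n%:R <= 1 by rewrite ler_pdivrMr ?mul1r; [lra | lra].
apply: lerXn2r; rewrite ?nnegrE ?expR_ge0 //; last exact: expR_ge1Dx.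
have := expR_gt0 s; nra.
Qed.

Lemma expR_mhalf (R : realType) : expR (- (1/2)) <= 5/8 :> R.
Proof.
have h : (9/8) ^+ 4 <= expR (1/2) :> R.
  rewrite (_ : 1/2 = 4%:R * (1/8)); last by field.
  rewrite expRM_natl; apply: lerXn2r; rewrite ?nnegrE ?expR_ge0 //.
    lra.
  have := expR_ge1Dx (1/8 : R); lra.
have h2 : (8/5 : R) <= expR (1/2) by apply: le_trans h; rewrite (_ : (9/8 : R)^+4 = 6561/4096); [lra | field].
rewrite expRN -div1r ler_pdivrMr ?expR_gt0 //; lra.
Qed.

Lemma expR_ge1 (R : realType) (x : R) : 0 <= x -> 1 <= expR x.
Proof. move=> x0; have := expR_ge1Dx x; lra. Qed.

Lemma fw_rewrite (R : realType) n T (theta a s : R) (i : 'I_n) :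
  \sum_(w : {ffun 'I_T -> option 'I_n}) (\prod_(t < T) cmass theta (w t)) * expR (a + s * Nc R w i)
  = expR a * \sum_(w : {ffun 'I_T -> option 'I_n}) (\prod_(t < T) cmass theta (w t)) * expR (s * Nc R w i).
Proof.
rewrite mulr_sumr; apply: eq_bigr => w _; rewrite expRD; ring.
Qed.

Unset Implicit Arguments.
Theorem proposition2 (R : realType) (n T : nat) (theta delta : R) :
  (1 <= n)%N -> (1 <= T)%N -> 0 < theta <= 1 -> 0 < delta < 1 ->
  8 * n%:R / theta * ln (n%:R / delta) <= T%:R ->
  1 - 2 * delta <=
    @iid_prob R n T theta (fun w =>
      loewner_le ((theta * T%:R / (2 * n%:R)) *: 1%:M) (OtO R w) /\
      loewner_le (OtO R w) ((2 * expR 1 * theta * T%:R / n%:R) *: 1%:M)).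
Proof.
move=> n0 T0 th de hT.
have /andP[t0 t1] := th; have /andP[d0 d1] := de.
have n1 : 1 <= n%:R :> R by rewrite ler1n.
have nz : n%:R != 0 :> R by rewrite pnatr_eq0 -lt0n.
set p := theta / n%:R.
set mu := T%:R * p.
have p0 : 0 <= p by rewrite divr_ge0 // ltW.
have mu0 : 0 <= mu by rewrite mulr_ge0.
set e := expR 1.
pose f (i : 'I_n) (w : {ffun 'I_T -> option 'I_n}) := expR (mu / 4 + (- (1/2)) * Nc R w i).
pose g (i : 'I_n) (w : {ffun 'I_T -> option 'I_n}) := expR (- (2 * e * mu) + 1 * Nc R w i).
pose P (w : {ffun 'I_T -> option 'I_n}) := \prod_(t < T) cmass theta (w t).
have P0 : forall w, 0 <= P w.
  move=> w; apply: prodr_ge0 => t _; case: (w t) => [j|] /=; last by lra.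
  by rewrite divr_ge0 // ltW.
have hln : ln (n%:R / delta) <= mu / 8.
  have -> : ln (n%:R / delta) = (8 * n%:R / theta * ln (n%:R / delta)) * (theta / (8 * n%:R)).
    field; rewrite nz /=; lra.
  have -> : mu / 8 = T%:R * (theta / (8 * n%:R)).
    rewrite /mu /p; field; exact: nz.
  apply: ler_wpM2r => //; rewrite divr_ge0 ?ltW //; lra.
have hexp : expR (- (mu / 8)) <= delta / n%:R.
  apply: (le_trans (y := expR (- ln (n%:R / delta)))); first by rewrite ler_expR; lra.
  rewrite expRN lnK ?invf_div //.
  by rewrite posrE divr_gt0 //; lra.
have Fb : forall i, \sum_w P w * f i w <= delta / n%:R.
  move=> i; rewrite /f /P fw_rewrite; apply: le_trans hexp.
  apply: (le_trans (y := expR (mu/4) * expR (mu * (expR (- (1/2)) - 1)))).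
    by apply: ler_wpM2l; rewrite ?expR_ge0 // mgf_bound.
  rewrite -expRD ler_expR; have := expR_mhalf R; nra.
have Gb : forall i, \sum_w P w * g i w <= delta / n%:R.
  move=> i; rewrite /g /P fw_rewrite; apply: le_trans hexp.
  apply: (le_trans (y := expR (- (2 * e * mu)) * expR (mu * (expR 1 - 1)))).
    by apply: ler_wpM2l; rewrite ?expR_ge0 // mgf_bound.
  rewrite -expRD ler_expR -/e; have : 0 <= e by rewrite expR_ge0. nra.
have step1 : \sum_w P w * (1 - \sum_i (f i w + g i w)) <= @iid_prob R n T theta
    (fun w => loewner_le ((theta * T%:R / (2 * n%:R)) *: 1%:M) (OtO R w) /\
      loewner_le (OtO R w) ((2 * expR 1 * theta * T%:R / n%:R) *: 1%:M)).
  rewrite /iid_prob [X in _ <= X]big_mkcond /=.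
apply: ler_sum => w _.
  have S0 : 0 <= \sum_i (f i w + g i w) by apply: sumr_ge0 => i _; rewrite addr_ge0 ?expR_ge0.
  case: asboolP => [_|nE].
    have := P0 w; rewrite /P; nra.
  case: (boolP [forall i, (mu / 2 <= Nc R w i <= 2 * e * mu)]) => [/forallP hall|/forallPn [i hi]].
    exfalso; apply: nE; rewrite OtO_diag.
    have -> : theta * T%:R / (2 * n%:R) = mu / 2 by rewrite /mu /p; field.
    have -> : 2 * expR 1 * theta * T%:R / n%:R = 2 * e * mu by rewrite /mu /p /e; field.
    by apply: loewner_diag => j; rewrite mxE; exact: hall.
  have S1 : 1 <= \sum_i (f i w + g i w).
    rewrite (bigD1 i) //=.
    have : 0 <= \sum_(j | j != i) (f j w + g j w) by apply: sumr_ge0 => j _; rewrite addr_ge0 ?expR_ge0.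
    have f0 : 0 <= f i w by rewrite expR_ge0.
    have g0 : 0 <= g i w by rewrite expR_ge0.
    rewrite negb_and -!ltNge in hi; case/orP: hi => hi.
      have : 1 <= f i w by apply: expR_ge1; lra.
      lra.
    have : 1 <= g i w by apply: expR_ge1; lra.
    lra.
  have := P0 w; rewrite /P; nra.
apply: le_trans step1.
have -> : \sum_w P w * (1 - \sum_i (f i w + g i w))
   = \sum_w P w - \sum_i (\sum_w P w * f i w + \sum_w P w * g i w).
  under [X in _ = _ - X]eq_bigr => i _ do rewrite -big_split /=.
  rewrite [X in _ = _ - X]exchange_big /= -sumrB; apply: eq_bigr => w _.
  by rewrite mulrBr mulr1 mulr_sumr; congr (_ - _); apply: eq_bigr => i _; rewrite mulrDr.
rewrite /P sumP1 //.
have : \sum_i (\sum_w P w * f i w + \sum_w P w * g i w) <= \sum_(i < n) (2 * delta / n%:R).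
  by apply: ler_sum => i _; have := Fb i; have := Gb i; lra.
move=> H; rewrite sumr_const card_ord -[X in _ <= X]mulr_natr mulfVK // in H; lra.
Qed.
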